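(* Let $M$ be an exact $\mathfrak{K}$-module. Assume that one of the pieces $M_0$, $M_1$ or $M_2$ is uniquely $p$-divisible. Then the other two pieces are uniquely $p$-divisible as well. And there are a $\mathbb{Z}/2$-graded $\mathbb{Z}[1/p]$-module $X$ and $\mathbb{Z}/2$-graded $\mathbb{Z}[\vartheta,1/p]$-modules $Y,Z$ such that $M$ is isomorphic to the exact $\mathfrak{K}$-module $E(X,Y,Z)$.
   Context: Fix a prime $p$, $N(x)=1+x+\dots+x^{p-1}$, and $\vartheta$ a primitive $p$-th root of unity. A $\mathfrak{K}$-module $M$ amounts to $\mathbb{Z}/2$-graded abelian groups $M_0,M_1,M_2$ with homomorphisms $\alpha_{jk}\colon M_k\to M_j$ ($j\neq k$; $\alpha_{12},\alpha_{21}$ grading-reversing, others grading-preserving) with $\alpha_{jk}\alpha_{km}=0$ for $\{j,k,m\}=\{0,1,2\}$ and, for $t_0:=1-\alpha_{02}\alpha_{20}$, $s_1:=1-\alpha_{12}\alpha_{21}$, $t_2:=1-\alpha_{20}\alpha_{02}$, $s_2:=1-\alpha_{21}\alpha_{12}$: $\alpha_{01}\alpha_{10}=N(t_0)$, $\alpha_{10}\alpha_{01}=N(s_1)$, $N(t_2)+N(s_2)=p$. Morphisms are triples of grading-preserving maps commuting with all $\alpha_{jk}$. $M$ is exact if the cyclic sequences $M_0\xrightarrow{\alpha_{10}}M_1\xrightarrow{\alpha_{21}}M_2\xrightarrow{\alpha_{02}}M_0$ and $M_0\xrightarrow{\alpha_{20}}M_2\xrightarrow{\alpha_{12}}M_1\xrightarrow{\alpha_{01}}M_0$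 are exact. Uniquely $p$-divisible: multiplication by $p$ bijective. For $X,Y,Z$ as in the claim, $E(X,Y,Z)$ is the exact $\mathfrak{K}$-module with $M_0=X\oplus Y$, $M_1=X\oplus Z$, $M_2=Y\oplus\Sigma Z$ ($\Sigma Z$ is $Z$ with opposite parity), $\alpha_{01}(x,z)=(x,0)$, $\alpha_{10}(x,y)=(px,0)$, $\alpha_{12}(y,z)=(0,(1-\vartheta)z)$, $\alpha_{21}(x,z)=(0,z)$, $\alpha_{20}(x,y)=(y,0)$, $\alpha_{02}(y,z)=(0,(1-\vartheta)y)$. *)

(* Defs.v *)
From HB Require Import structures.
From mathcomp Require Import all_boot all_order all_algebra.
Set Implicit Arguments. Unset Strict Implicit. Unset Printing Implicit Defensive.
Import GRing.Theory.
Local Open Scope ring_scope.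

Definition addmap (A B : zmodType) (f : A -> B) : Prop :=
  forall x y, f (x + y) = f x + f y.

(* A Z/2-graded abelian group G = G_even (+) G_odd is encoded as an abelian
   group G with an additive idempotent g : G -> G (projection onto G_even
   along G_odd). *)
Definition is_grading (G : zmodType) (g : G -> G) : Prop :=
  addmap g /\ forall x, g (g x) = g x.

Definition gr_pres (A B : zmodType) (g : A -> A) (g' : B -> B) (f : A -> B) :=
  forall x, f (g x) = g' (f x).

(* f is grading-reversing: f maps A_even to B_odd and A_odd to B_even,
   i.e. f o g = (1 - g') o f *)
Definition gr_rev (A B : zmodType) (g : A -> A) (g' : B -> B) (f : A -> B) :=
  forall x, f (g x) = f x - g' (f x).

Definition Nop (p : nat) (G : zmodType) (f : G -> G) : G -> G :=
  fun x => \sum_(i < p) iter i f x.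

Definition uniq_pdiv (p : nat) (G : zmodType) : Prop :=
  bijective (fun x : G => x *+ p).

Unset Implicit Arguments.
Record rawK := RawK {
  K0 : zmodType; K1 : zmodType; K2 : zmodType;
  g0 : K0 -> K0; g1 : K1 -> K1; g2 : K2 -> K2;
  a01 : K1 -> K0; a10 : K0 -> K1;
  a12 : K2 -> K1; a21 : K1 -> K2;
  a02 : K2 -> K0; a20 : K0 -> K2 }.
Set Implicit Arguments.

Definition is_Kmodule (p : nat) (M : rawK) : Prop :=
  [/\ [/\ is_grading (g0 M), is_grading (g1 M) & is_grading (g2 M)],
      [/\ addmap (a01 M), addmap (a10 M) & addmap (a12 M)]
        /\ [/\ addmap (a21 M), addmap (a02 M) & addmap (a20 M)],
      [/\ gr_pres (g1 M) (g0 M) (a01 M), gr_pres (g0 M) (g1 M) (a10 M) &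
          gr_rev (g2 M) (g1 M) (a12 M)]
        /\ [/\ gr_rev (g1 M) (g2 M) (a21 M),
          gr_pres (g2 M) (g0 M) (a02 M) & gr_pres (g0 M) (g2 M) (a20 M)],
      [/\ forall x, a01 M (a12 M x) = 0, forall x, a02 M (a21 M x) = 0 &
          forall x, a10 M (a02 M x) = 0]
        /\ [/\ forall x, a12 M (a20 M x) = 0,
          forall x, a20 M (a01 M x) = 0 & forall x, a21 M (a10 M x) = 0] &
      [/\ forall x, a01 M (a10 M x) = Nop p (fun y => y - a02 M (a20 M y)) x,
          forall x, a10 M (a01 M x) = Nop p (fun y => y - a12 M (a21 M y)) x &
          forall x, Nop p (fun y => y - a20 M (a02 M y)) x
                    + Nop p (fun y => y - a21 M (a12 M y)) x = x *+ p]].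

Definition is_exactK (M : rawK) : Prop :=
  [/\ forall y, a21 M y = 0 <-> exists x, a10 M x = y,
      forall y, a02 M y = 0 <-> exists x, a21 M x = y &
      forall y, a10 M y = 0 <-> exists x, a02 M x = y]
  /\ [/\ forall y, a12 M y = 0 <-> exists x, a20 M x = y,
      forall y, a01 M y = 0 <-> exists x, a12 M x = y &
      forall y, a20 M y = 0 <-> exists x, a01 M x = y].

Definition Kiso (M N : rawK) : Prop :=
  exists (f0 : K0 M -> K0 N) (f1 : K1 M -> K1 N) (f2 : K2 M -> K2 N),
  [/\ [/\ addmap f0, addmap f1 & addmap f2],
      [/\ bijective f0, bijective f1 & bijective f2],
      [/\ gr_pres (g0 M) (g0 N) f0, gr_pres (g1 M) (g1 N) f1
          & gr_pres (g2 M) (g2 N) f2] &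
      [/\ forall x, f0 (a01 M x) = a01 N (f1 x),
          forall x, f1 (a10 M x) = a10 N (f0 x) &
          forall x, f1 (a12 M x) = a12 N (f2 x)]
      /\ [/\ forall x, f2 (a21 M x) = a21 N (f1 x),
          forall x, f0 (a02 M x) = a02 N (f2 x) &
          forall x, f2 (a20 M x) = a20 N (f0 x)]].

(* Graded Z[1/p]-module: graded abelian group that is uniquely p-divisible. *)
Definition grZp (p : nat) (X : zmodType) (gX : X -> X) : Prop :=
  is_grading gX /\ uniq_pdiv p X.

(* Graded Z[theta,1/p]-module, Z[theta] = Z[x]/(1 + x + ... + x^(p-1)):
   graded, uniquely p-divisible abelian group with a grading-preserving
   additive endomorphism th (action of theta) with N(th) = 0. *)
Definition grZthp (p : nat) (Y : zmodType) (gY : Y -> Y) (th : Y -> Y) :=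
  [/\ is_grading gY, uniq_pdiv p Y, addmap th, gr_pres gY gY th &
      forall y, Nop p th y = 0].

Definition EK (p : nat) (X Y Z : zmodType) (gX : X -> X) (gY : Y -> Y)
  (thY : Y -> Y) (gZ : Z -> Z) (thZ : Z -> Z) : rawK :=
  @RawK (X * Y)%type (X * Z)%type (Y * Z)%type
    (fun v => (gX v.1, gY v.2))
    (fun v => (gX v.1, gZ v.2))
    (fun v => (gY v.1, v.2 - gZ v.2))          (* Sigma Z: opposite parity *)
    (fun v => (v.1, 0))
    (fun v => (v.1 *+ p, 0))
    (fun v => (0, v.2 - thZ v.2))
    (fun v => (0, v.2))
    (fun v => (0, v.1 - thY v.1))
    (fun v => (v.2, 0)).

(* Main.v *)
Require Import Defs.
From HB Require Import structures.
From mathcomp Require Import all_boot all_order all_algebra.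
Set Implicit Arguments. Unset Strict Implicit. Unset Printing Implicit Defensive.
Import GRing.Theory.
Local Open Scope ring_scope.

Section Generic.
Variable p : nat.

Lemma am0 (G H : zmodType) (f : G -> H) : addmap f -> f 0 = 0.
Proof.
by move=> af; have h := af 0 0; rewrite addr0 in h; apply: (addrI (f 0)); rewrite -h addr0.
Qed.

Lemma amN (G H : zmodType) (f : G -> H) : addmap f -> forall x, f (- x) = - f x.
Proof.
move=> af x; apply: (addrI (f x)); by rewrite -af !subrr am0.
Qed.

Lemma amB (G H : zmodType) (f : G -> H) : addmap f -> forall x y, f (x - y) = f x - f y.
Proof. by move=> af x y; rewrite af amN. Qed.

Lemma amMn (G H : zmodType) (f : G -> H) : addmap f -> forall x n, f (x *+ n) = f x *+ n.
Proof.
move=> af x; elim=> [|n IH]; first by rewrite !mulr0n am0.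
by rewrite !mulrS af IH.
Qed.

Lemma am_sum (G H : zmodType) (f : G -> H) (I : Type) (r : seq I) (P : pred I) (F : I -> G) :
  addmap f -> f (\sum_(i <- r | P i) F i) = \sum_(i <- r | P i) f (F i).
Proof. by move=> af; apply: (big_morph f af (am0 af)). Qed.

Lemma am_comp (G H K : zmodType) (f : H -> K) (g : G -> H) :
  addmap f -> addmap g -> addmap (fun x => f (g x)).
Proof. by move=> af ag x y; rewrite ag af. Qed.

Lemma am_sub1 (G : zmodType) (u : G -> G) : addmap u -> addmap (fun y => y - u y).
Proof. by move=> au x y; rewrite au opprD addrACA. Qed.

Lemma am_iter (G : zmodType) (t : G -> G) n : addmap t -> addmap (iter n t).
Proof. by move=> aT; elim: n => [//|n IH] x y /=; rewrite IH aT. Qed.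

Lemma am_bigsum (G H : zmodType) (I : Type) (r : seq I) (P : pred I) (F : I -> G -> H) :
  (forall i, addmap (F i)) -> addmap (fun x => \sum_(i <- r | P i) F i x).
Proof.
by move=> aF x y; rewrite -big_split /=; apply: eq_bigr => i _; rewrite aF.
Qed.

Definition Wop (G : zmodType) (t : G -> G) (x : G) : G :=
  \sum_(i < p) \sum_(j < i) iter j t x.

Lemma am_Nop (G : zmodType) (t : G -> G) : addmap t -> addmap (Nop p t).
Proof. by move=> aT; apply: am_bigsum => i; apply: am_iter. Qed.

Lemma am_Wop (G : zmodType) (t : G -> G) : addmap t -> addmap (Wop t).
Proof.
move=> aT; apply: am_bigsum => i; apply: am_bigsum => j; exact: am_iter.
Qed.

Definition intw (G H : zmodType) (h : G -> H) (t : G -> G) (t' : H -> H) :=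
  forall x, h (t x) = t' (h x).

Lemma iter_intw (G H : zmodType) (h : G -> H) t t' :
  intw h t t' -> forall n x, h (iter n t x) = iter n t' (h x).
Proof. by move=> ht; elim=> [//|n IH] x /=; rewrite ht IH. Qed.

Lemma Nop_intw (G H : zmodType) (h : G -> H) t t' :
  addmap h -> intw h t t' -> forall x, h (Nop p t x) = Nop p t' (h x).
Proof.
move=> ah ht x; rewrite /Nop am_sum //; apply: eq_bigr => i _; exact: iter_intw.
Qed.

Lemma Wop_intw (G H : zmodType) (h : G -> H) t t' :
  addmap h -> intw h t t' -> forall x, h (Wop t x) = Wop t' (h x).
Proof.
move=> ah ht x; rewrite /Wop am_sum //; apply: eq_bigr => i _.
rewrite am_sum //; apply: eq_bigr => j _; exact: iter_intw.
Qed.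

Lemma intw_sub1 (G H : zmodType) (h : G -> H) u u' :
  addmap h -> intw h u u' -> intw h (fun y => y - u y) (fun y => y - u' y).
Proof. by move=> ah hu x; rewrite amB // hu. Qed.

Lemma NW (G : zmodType) (u : G -> G) : addmap u -> forall x,
  Nop p (fun y => y - u y) x = x *+ p - u (Wop (fun y => y - u y) x).
Proof.
move=> au x; set t := fun y => y - u y.
have hi : forall i, iter i t x = x - u (\sum_(j < i) iter j t x).
  elim=> [|i IH]; first by rewrite big_ord0 am0 // subr0.
  rewrite big_ord_recr /= au opprD addrA -IH.
  by rewrite {1}/t.
rewrite /Nop /Wop (eq_bigr _ (fun (i : 'I_p) _ => hi i)) big_split /= sumr_const card_ord.
by rewrite sumrN (am_sum _ _ _ au).
Qed.

Lemma key_alg (G : zmodType) (c E F : G) : (c - E) + (c - F) = c -> c = E + F.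
Proof.
move=> h; apply/eqP; rewrite -subr_eq0; apply/eqP.
transitivity ((c - E + (c - F)) - c); last by rewrite h subrr.
by rewrite opprD addrA [c - F]addrC addrA addrK.
Qed.

Lemma pinv (G : zmodType) : uniq_pdiv p G ->
  exists ip : G -> G, (forall x, ip x *+ p = x) /\ (forall x, ip (x *+ p) = x).
Proof. by case=> g c1 c2; exists g; split. Qed.

Lemma ip_comm (G H : zmodType) (h : G -> H) (ipG : G -> G) (ipH : H -> H) :
  addmap h -> (forall x, ipG x *+ p = x) -> (forall y, ipH (y *+ p) = y) ->
  forall x, h (ipG x) = ipH (h x).
Proof. by move=> ah c1 c2 x; rewrite -{2}(c1 x) amMn // c2. Qed.

Lemma ip_add (G : zmodType) (ip : G -> G) :
  (forall x, ip x *+ p = x) -> (forall y, ip (y *+ p) = y) -> addmap ip.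
Proof. by move=> c1 c2 x y; rewrite -{1}(c1 x) -{1}(c1 y) -mulrnDl c2. Qed.

Lemma pdiv_of (G : zmodType) :
  (forall x : G, x *+ p = 0 -> x = 0) -> (forall y : G, exists x, x *+ p = y) ->
  uniq_pdiv p G.
Proof.
move=> inj sur.
have sur' : forall y : G, exists x, x *+ p == y by move=> y; have [x hx] := sur y; exists x; rewrite hx.
exists (fun y => xchoose (sur' y)) => [x|y]; last exact/eqP/(xchooseP (sur' y)).
apply/eqP; rewrite -subr_eq0; apply/eqP; apply: inj.
by rewrite mulrnBl (eqP (xchooseP (sur' _))) subrr.
Qed.

End Generic.
Record addfun (G H : zmodType) := AddFun { afun :> G -> H ; afunP : addmap afun }.

Section Ker.
Context (G H : zmodType) (F : addfun G H).
Definition kpred : {pred G} := fun x => F x == 0.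
Lemma kpred_closed : zmod_closed kpred.
Proof.
have F0 : F 0 = 0.
  by have h := afunP F 0 0; rewrite addr0 in h; apply: (addrI (F 0)); rewrite -h addr0.
have FN : forall x, F (- x) = - F x.
  by move=> x; apply/eqP; rewrite -subr_eq0 opprK -afunP addNr F0.
split; first by rewrite /kpred unfold_in /= F0.
by move=> x y; rewrite /kpred !unfold_in /= afunP FN => /eqP -> /eqP ->; rewrite subrr.
Qed.
HB.instance Definition _ := GRing.isZmodClosed.Build G kpred kpred_closed.
Inductive kerT : predArgType := KerT x of x \in kpred.
Definition kval w : G := let: KerT u _ := w in u.
HB.instance Definition _ := [isSub of kerT for kval].
HB.instance Definition _ := [Choice of kerT by <:].
HB.instance Definition _ := [SubChoice_isSubZmodule of kerT by <:].
Lemma kvalD (x y : kerT) : kval (x + y) = kval x + kval y. Proof. by []. Qed.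
Lemma kvalN (x : kerT) : kval (- x) = - kval x. Proof. by []. Qed.
Lemma kval0 : kval (0 : kerT) = 0. Proof. by []. Qed.
Lemma kval_inj : injective kval. Proof. exact: val_inj. Qed.
Lemma am_kval : addmap kval. Proof. by []. Qed.
Lemma kvalMn (x : kerT) n : kval (x *+ n) = kval x *+ n.
Proof. exact: (amMn am_kval). Qed.
Lemma kinP x : F x = 0 -> x \in kpred.
Proof. by move=> h; rewrite unfold_in /kpred /= h. Qed.
Lemma koutP x : x \in kpred -> F x = 0.
Proof. by rewrite unfold_in /kpred /= => /eqP. Qed.
Lemma kvalP (x : kerT) : F (kval x) = 0.
Proof. by case: x => y hy /=; apply: koutP. Qed.
End Ker.
Lemma Fp_int_dvd (p : nat) (z : int) : prime p -> (z%:~R : 'F_p) = 0 -> (p%:Z %| z)%Z.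
Proof.
move=> pp; rewrite dvdzE /=.
have hc := pchar_Fp pp.
case: z => n /=.
  by move=> h; rewrite (dvdn_pcharf hc); apply/eqP; rewrite pmulrn.
rewrite NegzE mulrNz => /eqP; rewrite oppr_eq0 -pmulrn -(dvdn_pcharf hc).
by [].
Qed.

Lemma polyN1 (p : nat) : prime p ->
  exists R : {poly int}, \sum_(i < p) (1 - 'X)^+i - 'X^(p.-1) = R *+ p.
Proof.
move=> pp; set D := _ - _.
have hF : map_poly (intr : int -> 'F_p) D = 0.
  rewrite /D rmorphB rmorph_sum /= map_polyXn.
  under eq_bigr => i _ do rewrite rmorphXn rmorphB rmorph1 /= map_polyX.
  set S := \sum_(i < p) _.
  have hc : p \in [pchar {poly 'F_p}] by rewrite pchar_poly pchar_Fp.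
  have hn : ([pchar {poly 'F_p}]).-nat p by rewrite pnatE.
  have h1 : (1 - 'X : {poly 'F_p}) ^+ p = 1 - 'X^p.
    by rewrite exprDn_pchar // exprNn_pchar // expr1n.
  have h2 : 'X * S = 'X^p.
    have := subrX1 (1 - 'X : {poly 'F_p}) p; rewrite h1 addrAC subrr add0r.
    by rewrite addrAC subrr add0r mulNr => /eqP; rewrite eqr_opp => /eqP <-.
  have h3 : 'X * (S - 'X^(p.-1)) = 0.
    by rewrite mulrBr h2 -exprS prednK ?prime_gt0 // subrr.
  by move/eqP: h3; rewrite mulf_eq0 polyX_eq0 /= => /eqP.
have hd : forall k, (p%:Z %| D`_k)%Z.
  by move=> k; apply: Fp_int_dvd => //; rewrite -coef_map hF coef0.
exists (\poly_(k < size D) ((D`_k) %/ p%:Z)%Z).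
apply/polyP => k; rewrite coefMn coef_poly; case: ifP => hk.
  by rewrite -mulr_natr natz divzK.
rewrite nth_default ?mul0rn //; by rewrite leqNgt hk.
Qed.

Section Peval.
Variables (G : zmodType) (f : G -> G).
Hypothesis af : addmap f.

Definition peval (P : {poly int}) (x : G) : G := \sum_(k < size P) (iter k f x) *~ P`_k.

Lemma peval_wid n (P : {poly int}) (x : G) : (size P <= n)%N -> peval P x = \sum_(k < n) (iter k f x) *~ P`_k.
Proof.
move=> hn; rewrite /peval (big_ord_widen n (fun k => iter k f x *~ P`_k) hn) big_mkcond.
apply: eq_bigr => k _; case: ifP => // /negbT; rewrite -leqNgt => le.
by rewrite nth_default // mulr0z.
Qed.

Lemma pevalD (P Q : {poly int}) (x : G) : peval (P + Q) x = peval P x + peval Q x.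
Proof.
rewrite !(@peval_wid (maxn (size P) (size Q))) ?leq_maxl ?leq_maxr ?size_polyD //.
by rewrite -big_split; apply: eq_bigr => k _; rewrite coefD mulrzDr.
Qed.

Lemma pevalN (P : {poly int}) (x : G) : peval (- P) x = - peval P x.
Proof.
rewrite /peval size_polyN -sumrN; apply: eq_bigr => k _; by rewrite coefN mulrNz.
Qed.

Lemma peval0 (x : G) : peval 0 x = 0.
Proof. by rewrite /peval size_poly0 big_ord0. Qed.

Lemma peval_sum n (F : 'I_n -> {poly int}) x :
  peval (\sum_(i < n) F i) x = \sum_(i < n) peval (F i) x.
Proof.
apply: (big_morph (fun P => peval P x)) => [P Q|]; [exact: pevalD | exact: peval0].
Qed.

Lemma pevalMn (P : {poly int}) n (x : G) : peval (P *+ n) x = peval P x *+ n.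
Proof.
by elim: n => [|n IH]; rewrite ?mulr0n ?peval0 // !mulrS pevalD IH.
Qed.

Lemma pevalMX (P : {poly int}) (x : G) : peval (P * 'X) x = peval P (f x).
Proof.
have hs : (size (P * 'X)%R <= (size P).+1)%N.
  by apply: leq_trans (size_polyMleq _ _) _; rewrite size_polyX addn2.
rewrite (@peval_wid (size P).+1 _ _ hs) big_ord_recl coefMX /= mulr0z add0r /peval.
by apply: eq_bigr => k _; rewrite coefMX /= add0n -iterS iterSr.
Qed.

Lemma peval1 (x : G) : peval 1 x = x.
Proof. by rewrite /peval size_poly1 big_ord1 coef1 /= mulr1z. Qed.

Lemma peval_Xn n (x : G) : peval ('X^n) x = iter n f x.
Proof.
elim: n x => [|n IH] x; first by rewrite expr0 peval1.
by rewrite exprSr pevalMX IH iterSr.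
Qed.

Lemma peval_1X i (x : G) : peval ((1 - 'X)^+i) x = iter i (fun z => z - f z) x.
Proof.
elim: i x => [|i IH] x; first by rewrite expr0 peval1.
rewrite exprSr mulrBr mulr1 pevalD pevalN pevalMX !IH /=.
congr (_ - _); symmetry; apply: iter_intw => y.
by rewrite amB.
Qed.

Lemma am_peval (P : {poly int}) : addmap (peval P).
Proof.
apply: am_bigsum => k x y; by rewrite (am_iter _ af) mulrzDl.
Qed.

End Peval.

Lemma BIN (p : nat) (G : zmodType) (f : G -> G) : prime p -> addmap f ->
  exists R : G -> G, addmap R /\
   forall y, Nop p (fun z => z - f z) y - iter p.-1 f y = R y *+ p.
Proof.
move=> pp af; have [R hR] := polyN1 pp.
exists (peval f R); split; first exact: am_peval.
move=> y; rewrite -pevalMn -hR pevalD pevalN peval_Xn peval_sum /Nop.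
by congr (_ - _); apply: eq_bigr => i _; rewrite peval_1X.
Qed.
Section PD.
Variables (p : nat) (G0 G1 G2 : zmodType).
Variables (a01 : G1 -> G0) (a10 : G0 -> G1) (a12 : G2 -> G1) (a21 : G1 -> G2)
  (a02 : G2 -> G0) (a20 : G0 -> G2).
Hypotheses (h01 : addmap a01) (h10 : addmap a10) (h12 : addmap a12)
  (h21 : addmap a21) (h02 : addmap a02) (h20 : addmap a20).
Hypotheses (Z1 : forall x, a01 (a12 x) = 0) (Z2 : forall x, a02 (a21 x) = 0)
  (Z3 : forall x, a10 (a02 x) = 0) (Z4 : forall x, a12 (a20 x) = 0)
  (Z5 : forall x, a20 (a01 x) = 0) (Z6 : forall x, a21 (a10 x) = 0).
Hypotheses (N0 : forall x, a01 (a10 x) = Nop p (fun y => y - a02 (a20 y)) x)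
  (N1 : forall x, a10 (a01 x) = Nop p (fun y => y - a12 (a21 y)) x)
  (N2 : forall x, Nop p (fun y => y - a20 (a02 y)) x
                    + Nop p (fun y => y - a21 (a12 y)) x = x *+ p).
Hypotheses (E1 : forall y, a21 y = 0 -> exists x, a10 x = y)
  (E2 : forall y, a02 y = 0 -> exists x, a21 x = y)
  (E3 : forall y, a10 y = 0 -> exists x, a02 x = y)
  (E4 : forall y, a12 y = 0 -> exists x, a20 x = y)
  (E5 : forall y, a01 y = 0 -> exists x, a12 x = y)
  (E6 : forall y, a20 y = 0 -> exists x, a01 x = y).

Definition te := fun y : G2 => y - a20 (a02 y).
Definition tf := fun y : G2 => y - a21 (a12 y).
Definition tu := fun x : G0 => x - a02 (a20 x).
Definition tv := fun x : G1 => x - a12 (a21 x).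

Lemma ae : addmap (fun y => a20 (a02 y)). Proof. exact: am_comp. Qed.
Lemma af : addmap (fun y => a21 (a12 y)). Proof. exact: am_comp. Qed.
Lemma au : addmap (fun y => a02 (a20 y)). Proof. exact: am_comp. Qed.
Lemma av : addmap (fun y => a12 (a21 y)). Proof. exact: am_comp. Qed.
Lemma ate : addmap te. Proof. exact: am_sub1 ae. Qed.
Lemma atf : addmap tf. Proof. exact: am_sub1 af. Qed.
Lemma atu : addmap tu. Proof. exact: am_sub1 au. Qed.
Lemma atv : addmap tv. Proof. exact: am_sub1 av. Qed.

Lemma KEY2 y : y *+ p = a20 (a02 (Wop p te y)) + a21 (a12 (Wop p tf y)).
Proof.
apply: key_alg; have := N2 y.
by rewrite (NW p ae) (NW p af).
Qed.

Lemma N0' x : a01 (a10 x) = x *+ p - a02 (a20 (Wop p tu x)).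
Proof. by rewrite N0 (NW p au). Qed.

Lemma N1' x : a10 (a01 x) = x *+ p - a12 (a21 (Wop p tv x)).
Proof. by rewrite N1 (NW p av). Qed.

Lemma W20 x : a20 (Wop p tu x) = Wop p te (a20 x).
Proof. by apply: Wop_intw => // y; rewrite /tu /te amB. Qed.
Lemma W21 x : a21 (Wop p tv x) = Wop p tf (a21 x).
Proof. by apply: Wop_intw => // y; rewrite /tv /tf amB. Qed.
Lemma Wee y : a20 (a02 (Wop p te y)) = Wop p te (a20 (a02 y)).
Proof. by apply: (@Wop_intw p _ _ (fun y => a20 (a02 y)) te te ae) => z; rewrite /te !amB. Qed.
Lemma Wff y : a21 (a12 (Wop p tf y)) = Wop p tf (a21 (a12 y)).
Proof. by apply: (@Wop_intw p _ _ (fun y => a21 (a12 y)) tf tf af) => z; rewrite /tf !amB. Qed.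
Lemma Wuu x : a02 (a20 (Wop p tu x)) = Wop p tu (a02 (a20 x)).
Proof. by apply: (@Wop_intw p _ _ (fun y => a02 (a20 y)) tu tu au) => z; rewrite /tu !amB. Qed.

Lemma Wte0 : Wop p te 0 = 0. Proof. exact: am0 (am_Wop p ate). Qed.
Lemma Wtf0 : Wop p tf 0 = 0. Proof. exact: am0 (am_Wop p atf). Qed.
Lemma Wtu0 : Wop p tu 0 = 0. Proof. exact: am0 (am_Wop p atu). Qed.

Section Div2.
Variable ip2 : G2 -> G2.
Hypotheses (ip2K : forall x, ip2 x *+ p = x) (ip2P : forall x, ip2 (x *+ p) = x).

Lemma ip2_add : addmap ip2. Proof. exact: ip_add. Qed.
Lemma ip2_0 : ip2 0 = 0. Proof. exact: am0 ip2_add. Qed.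

Lemma yY (y : G2) : a21 (a12 y) = 0 -> y = a20 (a02 (Wop p te (ip2 y))).
Proof.
move=> fy; have := KEY2 (ip2 y); rewrite ip2K Wff.
by rewrite (ip_comm af ip2K ip2P) fy ip2_0 Wtf0 addr0.
Qed.

Lemma yZ (y : G2) : a20 (a02 y) = 0 -> y = a21 (a12 (Wop p tf (ip2 y))).
Proof.
move=> ey; have := KEY2 (ip2 y); rewrite ip2K Wee.
by rewrite (ip_comm ae ip2K ip2P) ey ip2_0 Wte0 add0r.
Qed.

Lemma L1 (m : G1) : a01 m = 0 -> a21 m = 0 -> m = 0.
Proof.
move=> /E5 [y <-] fy; rewrite (yY fy); exact: Z4.
Qed.

Lemma inj0 (x : G0) : x *+ p = 0 -> x = 0.
Proof.
move=> hx.
have h2 : a20 x = 0 by rewrite -(ip2P (a20 x)) -(amMn h20) hx (am0 h20) ip2_0.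
have h3 : a01 (a10 x) = 0.
  by rewrite N0' hx W20 h2 Wte0 (am0 h02) subrr.
have [y hy] := E3 (L1 h3 (Z6 x)).
have ey : a20 (a02 y) = 0 by rewrite hy.
by rewrite -hy (yZ ey) Z2.
Qed.

Lemma sur0 (x : G0) : exists x', x' *+ p = x.
Proof.
set y0 := Wop p te (ip2 (a20 x)).
have hy0 : a20 x = a20 (a02 y0) by apply: yY; rewrite Z4 am0.
have [m hm] : exists m, a01 m = x - a02 y0.
  by apply: E6; rewrite amB // -hy0 subrr.
set y1 := Wop p tf (ip2 (a21 m)).
have hy1 : a21 m = a21 (a12 y1) by apply: yZ; rewrite Z2 am0.
have [x1 hx1] : exists x1, a10 x1 = m - a12 y1.
  by apply: E1; rewrite amB // -hy1 subrr.
have ham : a01 m = x1 *+ p - a02 (a20 (Wop p tu x1)).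
  by rewrite -N0' hx1 amB // Z1 subr0.
exists (a02 (ip2 y0) + x1 - a02 (ip2 (a20 (Wop p tu x1)))).
rewrite mulrnBl mulrnDl -!(amMn h02) !ip2K -addrA -ham hm.
by rewrite addrC subrK.
Qed.

Lemma pdiv0 : uniq_pdiv p G0.
Proof. exact: pdiv_of inj0 sur0. Qed.

End Div2.
Section Div0.
Hypothesis pp : prime p.
Variable ip0 : G0 -> G0.
Hypotheses (ip0K : forall x, ip0 x *+ p = x) (ip0P : forall x, ip0 (x *+ p) = x).

Lemma ip0_add : addmap ip0. Proof. exact: ip_add. Qed.

Lemma LA (x : G0) : a01 (a10 x) = 0 -> x = a02 (a20 (Wop p tu (ip0 x))).
Proof.
rewrite N0' => /eqP; rewrite subr_eq0 => /eqP hx.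
rewrite -{1}(ip0P x) hx.
have hh : addmap (fun z => a02 (a20 (Wop p tu z))).
  by apply: am_comp => //; apply: am_comp => //; apply: am_Wop; exact: atu.
by rewrite -(ip_comm hh ip0K ip0P).
Qed.

Lemma LB (x : G0) : a02 (a20 x) = 0 -> x = a01 (a10 (ip0 x)).
Proof.
move=> ux.
have hx : a01 (a10 x) = x *+ p by rewrite N0' Wuu ux Wtu0 subr0.
have hh : addmap (fun z => a01 (a10 z)) by exact: am_comp.
by rewrite (ip_comm hh ip0K ip0P) hx ip0P.
Qed.

Lemma LC (y : G2) : a02 y = 0 -> a21 (a12 y) = 0 -> y = 0.
Proof.
move=> hy /E1 [x hx].
have h1 : a01 (a10 x) = 0 by rewrite hx Z1.
have h2 : a12 y = 0 by rewrite -hx (LA h1) Z3.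
have [x' hx'] := E4 h2.
have h3 : a02 (a20 x') = 0 by rewrite hx'.
by rewrite -hx' (LB h3) Z5.
Qed.

Lemma LD (z : G2) : a02 z = 0 -> exists w, a02 w = 0 /\ a21 (a12 w) = z.
Proof.
move=> /E2 [m hm].
set x := a01 m.
have hx : x = a01 (a10 (ip0 x)) by apply: LB; rewrite /x Z5 am0.
have [y hy] : exists y, a12 y = m - a10 (ip0 x).
  by apply: E5; rewrite amB // -hx subrr.
set x2 := a02 y.
have hx2 : x2 = a02 (a20 (Wop p tu (ip0 x2))) by apply: LA; rewrite /x2 Z3 am0.
exists (y - a20 (Wop p tu (ip0 x2))); split.
  by rewrite amB // -hx2 subrr.
by rewrite amB // Z4 subr0 hy amB // Z6 subr0.
Qed.

Lemma LD' k (z : G2) : a02 z = 0 -> exists w, a02 w = 0 /\ iter k (fun y => a21 (a12 y)) w = z.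
Proof.
elim: k z => [|k IH] z hz; first by exists z.
have [w [hw <-]] := IH z hz.
have [w' [hw' <-]] := LD hw.
by exists w'; split => //; rewrite iterSr.
Qed.

Lemma Nf0 (w : G2) : a02 w = 0 -> Nop p tf w = 0.
Proof.
move=> hw; have := N2 w.
rewrite (NW p ae) Wee hw am0 // Wte0 subr0 => /eqP.
by rewrite -{2}(addr0 (w *+ p)) (inj_eq (addrI _)) => /eqP.
Qed.

Lemma inj2 (y : G2) : y *+ p = 0 -> y = 0.
Proof.
move=> hy.
have h0 : a02 y = 0 by rewrite -(ip0P (a02 y)) -(amMn h02) hy (am0 h02) (am0 ip0_add).
have [R [aR hR]] := BIN pp af.
have h1 : iter p.-1 (fun y => a21 (a12 y)) y = 0.
  have := hR y; rewrite -(amMn aR) hy (am0 aR) (Nf0 h0) sub0r => /eqP.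
  by rewrite oppr_eq0 => /eqP.
have hall : forall k, a02 (iter k (fun y => a21 (a12 y)) y) = 0.
  by case=> [|k] //=; rewrite Z2.
suff : forall k, iter k (fun y => a21 (a12 y)) y = 0 -> y = 0 by move/(_ _ h1).
elim=> [//|k IH] /= hk; apply: IH; exact: LC (hall k) hk.
Qed.

Lemma sur2 (y : G2) : exists y', y' *+ p = y.
Proof.
set x := a02 y.
have hx : x = a02 (a20 (Wop p tu (ip0 x))) by apply: LA; rewrite /x Z3 am0.
set x4 := Wop p tu (ip0 x).
have hz : a02 (y - a20 x4) = 0 by rewrite amB // -hx subrr.
have [w [hw hwz]] := LD' p.-1 hz.
have [R [aR hR]] := BIN pp af.
exists (a20 (ip0 x4) - R w).
rewrite mulrnBl -(amMn h20) ip0K -hR (Nf0 hw) sub0r opprK hwz.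
by rewrite addrC subrK.
Qed.

Lemma pdiv2 : uniq_pdiv p G2.
Proof. exact: pdiv_of inj2 sur2. Qed.

End Div0.
Section Struct.
Variables (g0 : G0 -> G0) (g1 : G1 -> G1) (g2 : G2 -> G2).
Hypotheses (Hg0 : is_grading g0) (Hg1 : is_grading g1) (Hg2 : is_grading g2).
Hypotheses (P01 : gr_pres g1 g0 a01) (P10 : gr_pres g0 g1 a10)
  (R12 : gr_rev g2 g1 a12) (R21 : gr_rev g1 g2 a21)
  (P02 : gr_pres g2 g0 a02) (P20 : gr_pres g0 g2 a20).
Variables (ip0 : G0 -> G0) (ip1 : G1 -> G1) (ip2 : G2 -> G2).
Hypotheses (ip0K : forall x, ip0 x *+ p = x) (ip0P : forall x, ip0 (x *+ p) = x).
Hypotheses (ip1K : forall x, ip1 x *+ p = x) (ip1P : forall x, ip1 (x *+ p) = x).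
Hypotheses (ip2K : forall x, ip2 x *+ p = x) (ip2P : forall x, ip2 (x *+ p) = x).

Let ag0 : addmap g0 := Hg0.1.
Let ag1 : addmap g1 := Hg1.1.
Let ag2 : addmap g2 := Hg2.1.
Let ai0 : addmap ip0 := ip_add ip0K ip0P.
Let ai1 : addmap ip1 := ip_add ip1K ip1P.
Let ai2 : addmap ip2 := ip_add ip2K ip2P.

Definition PX (m : G0) : G0 := a01 (a10 (ip0 m)).
Definition PY (w : G2) : G2 := a20 (a02 (Wop p te (ip2 w))).
Definition PZ (w : G2) : G2 := a21 (a12 (Wop p tf (ip2 w))).

Lemma aPX : addmap PX.
Proof. by apply: am_comp => //; apply: am_comp. Qed.
Lemma aPY : addmap PY.
Proof. apply: am_comp => //; apply: am_comp => //; apply: am_comp => //; exact: am_Wop ate. Qed.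
Lemma aPZ : addmap PZ.
Proof. apply: am_comp => //; apply: am_comp => //; apply: am_comp => //; exact: am_Wop atf. Qed.

Lemma PYZ w : PY w + PZ w = w.
Proof. by rewrite /PY /PZ -KEY2 ip2K. Qed.
Lemma PY_f w : a21 (a12 (PY w)) = 0.
Proof. by rewrite /PY Z4 am0. Qed.
Lemma PZ_e w : a20 (a02 (PZ w)) = 0.
Proof. by rewrite /PZ Z2 am0. Qed.
Lemma PY0 w : a20 (a02 w) = 0 -> PY w = 0.
Proof. by move=> h; rewrite /PY Wee (ip_comm ae ip2K ip2P) h (am0 ai2) Wte0. Qed.
Lemma PZ0 w : a21 (a12 w) = 0 -> PZ w = 0.
Proof. by move=> h; rewrite /PZ Wff (ip_comm af ip2K ip2P) h (am0 ai2) Wtf0. Qed.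
Lemma PY_id w : a21 (a12 w) = 0 -> PY w = w.
Proof. by move=> h; have := PYZ w; rewrite PZ0 // addr0. Qed.
Lemma PZ_id w : a20 (a02 w) = 0 -> PZ w = w.
Proof. by move=> h; have := PYZ w; rewrite PY0 // add0r. Qed.
Lemma PX_id x : a20 x = 0 -> PX x = x.
Proof.
move=> h; rewrite /PX (ip_comm (am_comp h01 h10) ip0K ip0P) N0' Wuu h (am0 h02).
by rewrite Wtu0 subr0 ip0P.
Qed.
Lemma PX_02 w : PX (a02 w) = 0.
Proof. by rewrite /PX -(ip_comm h02 ip2K ip0P) Z3 am0. Qed.

Lemma g2e w : a20 (a02 (g2 w)) = g2 (a20 (a02 w)).
Proof. by rewrite P02 P20. Qed.
Lemma g2f w : a21 (a12 (g2 w)) = g2 (a21 (a12 w)).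
Proof. by rewrite R12 (amB h21) R21 opprB addrC subrK. Qed.
Lemma g2PY w : PY (g2 w) = g2 (PY w).
Proof.
rewrite /PY -(ip_comm ag2 ip2K ip2P) -g2e; congr (a20 (a02 _)).
by symmetry; apply: Wop_intw => // y; rewrite /te (amB ag2) g2e.
Qed.
Lemma g2PZ w : PZ (g2 w) = g2 (PZ w).
Proof.
rewrite /PZ -(ip_comm ag2 ip2K ip2P) -g2f; congr (a21 (a12 _)).
by symmetry; apply: Wop_intw => // y; rewrite /tf (amB ag2) g2f.
Qed.
Lemma g0PX m : PX (g0 m) = g0 (PX m).
Proof. by rewrite /PX -(ip_comm ag0 ip0K ip0P) P10 P01. Qed.

Definition FX : addfun G0 G2 := AddFun h20.
Definition FY : addfun G2 G2 := AddFun af.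
Definition FZ : addfun G2 G2 := AddFun ae.
Definition X := kerT FX.
Definition Y := kerT FY.
Definition Z := kerT FZ.

Lemma fe (y : Y) : a21 (a12 (kval y)) = 0. Proof. exact: (kvalP y). Qed.
Lemma fz (z : Z) : a20 (a02 (kval z)) = 0. Proof. exact: (kvalP z). Qed.
Lemma fx (x : X) : a20 (kval x) = 0. Proof. exact: (kvalP x). Qed.

Lemma gX_in (x : X) : g0 (kval x) \in kpred FX.
Proof. by apply: kinP; rewrite /= P20 fx am0. Qed.
Lemma gY_in (y : Y) : g2 (kval y) \in kpred FY.
Proof. by apply: kinP; rewrite /= g2f fe am0. Qed.
Lemma gZ_in (z : Z) : kval z - g2 (kval z) \in kpred FZ.
Proof. by apply: kinP; rewrite /= (amB h02) (amB h20) g2e fz (am0 ag2) subrr. Qed.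
Lemma thY_in (y : Y) : te (kval y) \in kpred FY.
Proof. by apply: kinP; rewrite /= /te (amB h12) (amB h21) Z4 (am0 h21) fe subrr. Qed.
Lemma thZ_in (z : Z) : tf (kval z) \in kpred FZ.
Proof. by apply: kinP; rewrite /= /tf (amB h02) (amB h20) Z2 (am0 h20) fz subrr. Qed.
Lemma ipX_in (x : X) : ip0 (kval x) \in kpred FX.
Proof. by apply: kinP; rewrite /= (ip_comm h20 ip0K ip2P) fx am0. Qed.
Lemma ipY_in (y : Y) : ip2 (kval y) \in kpred FY.
Proof. by apply: kinP; rewrite /= (ip_comm af ip2K ip2P) fe am0. Qed.
Lemma ipZ_in (z : Z) : ip2 (kval z) \in kpred FZ.
Proof. by apply: kinP; rewrite /= (ip_comm ae ip2K ip2P) fz am0. Qed.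

Definition gX (x : X) : X := KerT (gX_in x).
Definition gY (y : Y) : Y := KerT (gY_in y).
Definition gZ (z : Z) : Z := KerT (gZ_in z).
Definition thY (y : Y) : Y := KerT (thY_in y).
Definition thZ (z : Z) : Z := KerT (thZ_in z).
Definition ipX (x : X) : X := KerT (ipX_in x).
Definition ipY (y : Y) : Y := KerT (ipY_in y).
Definition ipZ (z : Z) : Z := KerT (ipZ_in z).

Lemma pdivK (F : addfun G2 G2) (ip : kerT F -> kerT F) :
  (forall x, kval (ip x) = ip2 (kval x)) -> uniq_pdiv p (kerT F).
Proof.
move=> hip; exists ip => x; apply: kval_inj; rewrite ?kvalMn hip ?kvalMn.
  by rewrite ip2P.
by rewrite ip2K.
Qed.

Lemma pdivX : uniq_pdiv p X.
Proof.
exists ipX => x; apply: kval_inj; rewrite /= ?kvalMn /=.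
  by rewrite ip0P.
by rewrite ip0K.
Qed.

Lemma f0a_in (m : G0) : PX m \in kpred FX.
Proof. by apply: kinP; rewrite /= /PX Z5. Qed.
Lemma f0b_in (m : G0) : a20 m \in kpred FY.
Proof. by apply: kinP; rewrite /= Z4 am0. Qed.
Lemma f1a_in (m : G1) : a01 m \in kpred FX.
Proof. by apply: kinP; rewrite /= Z5. Qed.
Lemma f1b_in (m : G1) : a21 m \in kpred FZ.
Proof. by apply: kinP; rewrite /= Z2 am0. Qed.
Lemma f2a_in (w : G2) : PY w \in kpred FY.
Proof. by apply: kinP; rewrite /= PY_f. Qed.
Lemma f2b_in (w : G2) : PZ w \in kpred FZ.
Proof. by apply: kinP; rewrite /= PZ_e. Qed.

Definition f0 (m : G0) : (X * Y)%type := (KerT (f0a_in m), KerT (f0b_in m)).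
Definition f1 (m : G1) : (X * Z)%type := (KerT (f1a_in m), KerT (f1b_in m)).
Definition f2 (w : G2) : (Y * Z)%type := (KerT (f2a_in w), KerT (f2b_in w)).
Definition k0 (v : (X * Y)%type) : G0 := kval v.1 + a02 (Wop p te (ip2 (kval v.2))).
Definition k1 (v : (X * Z)%type) : G1 :=
  a10 (ip0 (kval v.1)) + a12 (Wop p tf (ip2 (kval v.2))).
Definition k2 (v : (Y * Z)%type) : G2 := kval v.1 + kval v.2.

Lemma NteY y : a21 (a12 y) = 0 -> Nop p te y = 0.
Proof.
move=> h; have := N2 y; rewrite (NW p af) Wff h Wtf0 subr0.
by move/eqP; rewrite -{2}(add0r (y *+ p)) (inj_eq (addIr _)) => /eqP.
Qed.
Lemma NtfZ y : a20 (a02 y) = 0 -> Nop p tf y = 0.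
Proof.
move=> h; have := N2 y; rewrite (NW p ae) Wee h Wte0 subr0.
move=> h2; apply: (addrI (y *+ p)); by rewrite addr0.
Qed.

Lemma structure :
  [/\ grZp p gX, grZthp p gY thY, grZthp p gZ thZ &
      Kiso (RawK G0 G1 G2 g0 g1 g2 a01 a10 a12 a21 a02 a20)
           (EK p gX gY thY gZ thZ)].
Proof.
split.
- split; last exact: pdivX.
  split=> [x y|x]; apply: kval_inj => /=; [exact: ag0 | exact: Hg0.2].
- split.
  + split=> [x y|x]; apply: kval_inj => /=; [exact: ag2 | exact: Hg2.2].
  + by apply: (@pdivK FY ipY).
  + by move=> x y; apply: kval_inj => /=; exact: ate.
  + by move=> x; apply: kval_inj => /=; rewrite /te (amB ag2) g2e.
  + move=> y; apply: kval_inj => /=.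
    rewrite (@Nop_intw p _ _ (@kval _ _ FY) thY te (@am_kval _ _ FY)) //.
    exact: NteY (fe y).
- split.
  + split=> [x y|x]; apply: kval_inj => /=.
      by apply: am_sub1.
    by rewrite (amB ag2) Hg2.2 subrr subr0.
  + by apply: (@pdivK FZ ipZ).
  + by move=> x y; apply: kval_inj => /=; exact: atf.
  + move=> x; apply: kval_inj => /=; rewrite /tf !(amB af) !(amB ag2) g2f.
    by rewrite !opprD !opprK addrACA.
  + move=> z; apply: kval_inj => /=.
    rewrite (@Nop_intw p _ _ (@kval _ _ FZ) thZ tf (@am_kval _ _ FZ)) //.
    exact: NtfZ (fz z).
exists f0, f1, f2; split.
- split.
  + by move=> x y; congr (_, _); apply: kval_inj => /=; [exact: aPX | exact: h20].
  + by move=> x y; congr (_, _); apply: kval_inj => /=; [exact: h01 | exact: h21].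
  + by move=> x y; congr (_, _); apply: kval_inj => /=; [exact: aPY | exact: aPZ].
- split.
  + exists k0 => [m|[x y]].
      rewrite /k0 /= /PX (ip_comm (am_comp h01 h10) ip0K ip0P) N0' W20.
      rewrite (ip_comm (am_Wop p ate) ip2K ip2P) (ip_comm h02 ip2K ip0P).
      by rewrite -ai0 subrK ip0P.
    congr (_, _); apply: kval_inj => /=.
      by rewrite aPX PX_02 addr0 PX_id // fx.
    by rewrite h20 fx add0r -/(PY (kval y)) PY_id // fe.
  + exists k1 => [m|[x z]].
      rewrite /k1 /= (ip_comm h10 ip0K ip1P) N1'.
      rewrite (ip_comm (am_Wop p atf) ip2K ip2P) (ip_comm h12 ip2K ip1P) -W21.
      by rewrite -ai1 subrK ip1P.
    congr (_, _); apply: kval_inj => /=.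
      by rewrite h01 Z1 addr0 -/(PX (kval x)) PX_id // fx.
    by rewrite h21 Z6 add0r -/(PZ (kval z)) PZ_id // fz.
  + exists k2 => [w|[y z]].
      by rewrite /k2 /= PYZ.
    congr (_, _); apply: kval_inj => /=.
      by rewrite aPY (PY_id (fe y)) (PY0 (fz z)) addr0.
    by rewrite aPZ (PZ_id (fz z)) (PZ0 (fe y)) add0r.
- split.
  + by move=> m; congr (_, _); apply: kval_inj => /=; [exact: g0PX | exact: P20].
  + by move=> m; congr (_, _); apply: kval_inj => /=; [exact: P01 | exact: R21].
  + move=> w; congr (_, _); apply: kval_inj => /=; first exact: g2PY.
    by rewrite g2PZ opprB addrC subrK.
- split; split.
  + by move=> m; congr (_, _); apply: kval_inj => /=; [rewrite PX_id // Z5 | exact: Z5].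
  + move=> x; congr (_, _); apply: kval_inj => /=; last exact: Z6.
    by rewrite kvalMn /= /PX -(amMn h01) -(amMn h10) ip0K.
  + move=> w; congr (_, _); apply: kval_inj => /=; first exact: Z1.
    by rewrite /tf opprB addrC subrK -{1}(PYZ w) h12 h21 PY_f add0r.
  + move=> m; congr (_, _); apply: kval_inj => /=.
      by rewrite PY0 // Z2 am0.
    by rewrite PZ_id // Z2 am0.
  + move=> w; congr (_, _); apply: kval_inj => /=; first exact: PX_02.
    by rewrite /te opprB addrC subrK -{1}(PYZ w) h02 h20 PZ_e addr0.
  + move=> x; congr (_, _); apply: kval_inj => /=.
      by rewrite PY_id // Z4 am0.
    by rewrite PZ0 // Z4 am0.
Qed.
End Struct.
End PD.

Lemma div_all (p : nat) (G0 G1 G2 : zmodType)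
  (a01 : G1 -> G0) (a10 : G0 -> G1) (a12 : G2 -> G1) (a21 : G1 -> G2)
  (a02 : G2 -> G0) (a20 : G0 -> G2)
  (h01 : addmap a01) (h10 : addmap a10) (h12 : addmap a12)
  (h21 : addmap a21) (h02 : addmap a02) (h20 : addmap a20)
  (Z1 : forall x, a01 (a12 x) = 0) (Z2 : forall x, a02 (a21 x) = 0)
  (Z3 : forall x, a10 (a02 x) = 0) (Z4 : forall x, a12 (a20 x) = 0)
  (Z5 : forall x, a20 (a01 x) = 0) (Z6 : forall x, a21 (a10 x) = 0)
  (N0 : forall x, a01 (a10 x) = Nop p (fun y => y - a02 (a20 y)) x)
  (N1 : forall x, a10 (a01 x) = Nop p (fun y => y - a12 (a21 y)) x)
  (N2 : forall x, Nop p (fun y => y - a20 (a02 y)) x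
                    + Nop p (fun y => y - a21 (a12 y)) x = x *+ p)
  (E1 : forall y, a21 y = 0 -> exists x, a10 x = y)
  (E2 : forall y, a02 y = 0 -> exists x, a21 x = y)
  (E3 : forall y, a10 y = 0 -> exists x, a02 x = y)
  (E4 : forall y, a12 y = 0 -> exists x, a20 x = y)
  (E5 : forall y, a01 y = 0 -> exists x, a12 x = y)
  (E6 : forall y, a20 y = 0 -> exists x, a01 x = y) :
  prime p -> uniq_pdiv p G0 \/ uniq_pdiv p G1 \/ uniq_pdiv p G2 ->
  [/\ uniq_pdiv p G0, uniq_pdiv p G1 & uniq_pdiv p G2].
Proof.
move=> pp H.
have N2' : forall x, Nop p (fun y => y - a21 (a12 y)) x
                    + Nop p (fun y => y - a20 (a02 y)) x = x *+ p.
  by move=> x; rewrite addrC N2.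
have d20 : uniq_pdiv p G2 -> uniq_pdiv p G0.
  by move=> /pinv [ip_ [K P]]; eapply (@pdiv0 p G0 G1 G2 a01 a10 a12 a21 a02 a20); eauto.
have d21 : uniq_pdiv p G2 -> uniq_pdiv p G1.
  by move=> /pinv [ip_ [K P]]; eapply (@pdiv0 p G1 G0 G2 a10 a01 a02 a20 a12 a21); eauto.
have d02 : uniq_pdiv p G0 -> uniq_pdiv p G2.
  by move=> /pinv [ip_ [K P]]; eapply (@pdiv2 p G0 G1 G2 a01 a10 a12 a21 a02 a20); eauto.
have d12 : uniq_pdiv p G1 -> uniq_pdiv p G2.
  by move=> /pinv [ip_ [K P]]; eapply (@pdiv2 p G1 G0 G2 a10 a01 a02 a20 a12 a21); eauto.
case: H => [H|[H|H]].
- by have H2 := d02 H; split => //; apply: d21.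
- by have H2 := d12 H; split => //; apply: d20.
- by split => //; [apply: d20 | apply: d21].
Qed.

Theorem theorem7p2 (p : nat) (M : rawK) :
  prime p -> is_Kmodule p M -> is_exactK M ->
  uniq_pdiv p (K0 M) \/ uniq_pdiv p (K1 M) \/ uniq_pdiv p (K2 M) ->
  [/\ uniq_pdiv p (K0 M), uniq_pdiv p (K1 M), uniq_pdiv p (K2 M) &
   exists (X Y Z : zmodType) (gX : X -> X) (gY : Y -> Y) (thY : Y -> Y)
          (gZ : Z -> Z) (thZ : Z -> Z),
     [/\ grZp p gX, grZthp p gY thY, grZthp p gZ thZ &
         Kiso M (EK p gX gY thY gZ thZ)]].
Proof.
case: M => G0 G1 G2 g0 g1 g2 a01 a10 a12 a21 a02 a20 /=.
move=> pp [[Hg0 Hg1 Hg2] [[h01 h10 h12] [h21 h02 h20]] [[P01 P10 R12] [R21 P02 P20]]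
  [[Z1 Z2 Z3] [Z4 Z5 Z6]] [N0 N1 N2]] [[E1 E2 E3] [E4 E5 E6]] Hd /=.
have [d0 d1 d2] := div_all h01 h10 h12 h21 h02 h20 Z1 Z2 Z3 Z4 Z5 Z6 N0 N1 N2
  (fun y => proj1 (E1 y)) (fun y => proj1 (E2 y)) (fun y => proj1 (E3 y))
  (fun y => proj1 (E4 y)) (fun y => proj1 (E5 y)) (fun y => proj1 (E6 y)) pp Hd.
split => //.
have [i0 [i0K i0P]] := pinv d0.
have [i1 [i1K i1P]] := pinv d1.
have [i2 [i2K i2P]] := pinv d2.
eexists; eexists; eexists; eexists; eexists; eexists; eexists; eexists.
exact: (structure h01 h10 h12 h21 h02 h20 Z1 Z2 Z3 Z4 Z5 Z6 N0 N1 N2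
  Hg0 Hg2 P01 P10 R12 R21 P02 P20 i0K i0P i1K i1P i2K i2P).
Qed.
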